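(* Let $X_1,\ldots,X_k\in\mathbf{M}_{2N}(\mathbb{C})$ commute pairwise and be self-dual ($X_j^\sharp=X_j$). Then there is a single symplectic unitary $U$ such that for all $j$, \[U^{*}X_jU=\begin{bmatrix}T_j&C_j\\0&T_j^{\mathrm T}\end{bmatrix}\] with each $T_j$ upper-triangular and each $C_j$ skew-symmetric ($N\times N$ blocks).
   Context: For $X\in\mathbf{M}_{2N}(\mathbb{C})$ in $N\times N$ blocks $X=\begin{bmatrix}A&B\\C&D\end{bmatrix}$, $X^{\sharp}=\begin{bmatrix}D^{\mathrm T}&-B^{\mathrm T}\\-C^{\mathrm T}&A^{\mathrm T}\end{bmatrix}$, equivalently $X^\sharp=-ZX^{\mathrm T}Z$ with $Z=\begin{bmatrix}0&I\\-I&0\end{bmatrix}$. A symplectic unitary is a unitary $U\in\mathbf{M}_{2N}(\mathbb{C})$ with $U^{\mathrm T}ZU=Z$. *)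

(* Defs.v *)
From HB Require Import structures.
From mathcomp Require Import all_boot all_order all_algebra.
From mathcomp Require Import sesquilinear spectral.
Set Implicit Arguments. Unset Strict Implicit. Unset Printing Implicit Defensive.
Import Order.TTheory GRing.Theory Num.Theory.
Local Open Scope ring_scope.

(* Complex scalars: any numeric algebraically closed field C (e.g. the complex
   numbers), with conjugation conjC; M^* is  M ^t conjC  (notation ^t* of spectral.v). *)

Definition Zmx (C : numClosedFieldType) (N : nat) : 'M[C]_(N + N) :=
  block_mx 0 1%:M (- 1%:M) 0.

Definition sharp (C : numClosedFieldType) (N : nat) (X : 'M[C]_(N + N)) : 'M[C]_(N + N) :=
  - (Zmx C N *m X^T *m Zmx C N).

Definition symplectic_unitary (C : numClosedFieldType) (N : nat) (U : 'M[C]_(N + N)) : Prop :=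
  U \is unitarymx /\ U^T *m Zmx C N *m U = Zmx C N.

Definition upper_triangular (C : numClosedFieldType) (N : nat) (T : 'M[C]_N) : Prop :=
  forall i j : 'I_N, (j < i)%N -> T i j = 0.

Definition skew_symmetric (C : numClosedFieldType) (N : nat) (A : 'M[C]_N) : Prop :=
  A^T = - A.

(* Main.v *)
Require Import Defs.
From HB Require Import structures.
From mathcomp Require Import all_boot all_order all_algebra.
From mathcomp Require Import sesquilinear mxred spectral zify.
Import Order.TTheory GRing.Theory Num.Theory Num.Def.
Local Open Scope ring_scope.
Local Open Scope sesquilinear_scope.

Section Z.
Variables (C : numClosedFieldType) (N : nat).
Local Notation Z := (Zmx C N).

Lemma ZT : Z^T = - Z.
Proof.
rewrite /Zmx tr_block_mx !trmx0 tr_scalar_mx linearN /= tr_scalar_mx opp_block_mx.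
by rewrite !oppr0 opprK.
Qed.

Lemma ZZ : Z *m Z = - 1%:M.
Proof.
rewrite /Zmx mulmx_block !(mulmx0, mul0mx, mulmx1, mul1mx, addr0, add0r).
by rewrite [in RHS]scalar_mx_block opp_block_mx oppr0.
Qed.

Lemma Zc : Z ^ conjC = Z.
Proof.
by rewrite /Zmx map_block_mx !map_mx0 map_mxN map_scalar_mx /= conjC1.
Qed.

Lemma ZtC : Z ^t* = - Z.
Proof. by rewrite -map_trmx Zc ZT. Qed.
End Z.

Lemma trC_mul (C : numClosedFieldType) m n p (A : 'M[C]_(m, n)) (B : 'M[C]_(n, p)) :
  (A *m B)^t* = B^t* *m A^t*.
Proof. by rewrite trmx_mul map_mxM. Qed.
Lemma flag_step (C : numClosedFieldType) n (Ys : seq 'M[C]_n) p q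
  (S : 'M[C]_(p,n)) (T : 'M[C]_(q,n)) :
  {in Ys &, forall A B, comm_mx A B} ->
  (forall Y, Y \in Ys -> stablemx T Y) ->
  (\rank S < \rank T)%N ->
  exists x : 'rV[C]_n, [/\ (x <= T)%MS, ~~ (x <= S)%MS &
     forall Y, Y \in Ys -> (x *m Y <= S + x)%MS].
Proof.
move=> Ycomm Tst rST.
set B := row_base T.
set As := [seq restrictmx T Y | Y <- Ys].
have Ascomm : {in As &, forall A B, comm_mx A B}.
  move=> _ _ /mapP[/= Y Y_in ->] /mapP[/= Y' Y'_in ->].
  rewrite /comm_mx -!conjmxM ?inE ?stablemx_row_base ?Tst //.
  by rewrite Ycomm.
have [P Pu /allP Ptrig] := cotrigonalization Ascomm.
have Punit : P \in unitmx by apply: unitarymx_unit.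
set Q := P *m B.
have QT : (Q <= T)%MS by rewrite (submx_trans (submxMl _ _)) // eq_row_base.
have key : forall Y, Y \in Ys -> forall i : 'I_(\rank T),
    row i Q *m Y = \sum_k (conjmx P (restrictmx T Y)) i k *: row k Q.
  move=> Y Yin i.
  have BY : B *m Y = restrictmx T Y *m B.
    by rewrite /conjmx mulmxKpV // stablemx_row_base Tst.
  have PA : P *m restrictmx T Y = conjmx P (restrictmx T Y) *m P.
    by rewrite conjumx // mulmxKV.
  rewrite /Q -row_mul -mulmxA BY mulmxA PA -mulmxA row_mul mulmx_sum_row.
  by apply: eq_bigr => k _; rewrite mxE.
have H : forall i, (forall k : 'I_(\rank T), (k < i)%N -> (row k Q <= S)%MS) \/
   exists x : 'rV[C]_n, [/\ (x <= T)%MS, ~~ (x <= S)%MS &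
     forall Y, Y \in Ys -> (x *m Y <= S + x)%MS].
  elim => [|i [IH|IH]]; [by left | | by right].
  case: (ltnP i (\rank T)) => [ir|ri].
    set ii := Ordinal ir.
    case: (boolP (row ii Q <= S)%MS) => [inS|notS].
      left => k; rewrite ltnS leq_eqVlt => /orP[/eqP kE|]; last exact: IH.
      by have -> : k = ii by apply: val_inj.
    right; exists (row ii Q); split => //.
      exact: submx_trans (row_sub _ _) QT.
    move=> Y Yin; rewrite key //; apply: summx_sub => k _.
    case: (ltngtP k ii) => [ki|ik|ki].
    - exact/scalemx_sub/(submx_trans (IH k ki) (addsmxSl _ _)).
    - have Tr : is_trig_mx (conjmx P (restrictmx T Y)).
        exact: (Ptrig _ (map_f _ Yin)).
      move/is_trig_mxP: Tr => Tr; rewrite (Tr ii k ik) scale0r sub0mx.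
      done.
    - have -> : k = ii by apply: val_inj.
      exact/scalemx_sub/addsmxSr.
  left => k _; apply: IH; exact: leq_trans (ltn_ord k) ri.
case: (H (\rank T)) => // allS.
have QS : (Q <= S)%MS by apply/row_subP => k; exact: allS.
have BS : (B <= S)%MS.
  by rewrite -(mulKmx Punit B) (submx_trans (submxMl _ _)).
have := mxrankS BS; rewrite eq_row_base => /leq_ltn_trans /(_ rST).
by rewrite ltnn.
Qed.

Section Main.
Variables (C : numClosedFieldType) (N k : nat) (X : 'I_k -> 'M[C]_(N + N)).
Hypothesis Hcomm : forall i j : 'I_k, X i *m X j = X j *m X i.
Hypothesis Hdual : forall j : 'I_k, sharp (X j) = X j.
Local Notation Z := (Zmx C N).
Local Notation n := (N + N)%N.
Let Y j := (X j)^T.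

Lemma YZ j : Y j *m Z = Z *m (Y j)^T.
Proof.
rewrite /Y trmxK -{2}(Hdual j) /sharp mulmxN !mulmxA ZZ !mulNmx mul1mx opprK.
by [].
Qed.

Definition inv m (U : 'M[C]_(m, n)) : Prop :=
  [/\ U \is unitarymx, U *m Z *m U^T = 0 &
    forall j, (U *m Y j <= U)%MS /\ is_trig_mx (U *m Y j *m U^t*)].

Arguments inv {m}.

Lemma tr11_0 (a : 'M[C]_1) : a^T = - a -> a = 0.
Proof.
rewrite [a]mx11_scalar tr_scalar_mx => /eqP.
rewrite -subr_eq0 opprK -raddfD /= => /eqP /matrixP /(_ 0 0).
rewrite !mxE /= mulr1n => /eqP; rewrite -mulr2n mulrn_eq0 /= => /eqP ->.
by rewrite raddf0.
Qed.


Lemma stepL m (U : 'M[C]_(m, n)) : (m < N)%N -> inv U ->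
  exists U' : 'M[C]_(m + 1, n), inv U'.
Proof.
move=> mN [Uu Uiso Ust].
set Ys := [seq Y j | j <- enum 'I_k].
set T := kermx (Z *m U^T).
have UT : (U <= T)%MS by rewrite sub_kermx mulmxA Uiso eqxx.
have TZ : T *m Z *m U^T = 0 by rewrite -mulmxA mulmx_ker.
have Tst j : (T *m Y j <= T)%MS.
  rewrite sub_kermx -mulmxA (mulmxA (Y j)) YZ -mulmxA -trmx_mul.
  have [D ->] := submxP (Ust j).1.
  by rewrite trmx_mul !mulmxA TZ mul0mx.
have rk : (\rank U < \rank T)%N.
  rewrite mxrank_unitary // mxrank_ker.
  have := rank_leq_col (Z *m U^T); lia.
have comm : {in Ys &, forall A B, comm_mx A B}.
  by move=> _ _ /mapP[i _ ->] /mapP[j _ ->]; rewrite /comm_mx /Y -!trmx_mul Hcomm.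
have YsT : forall Y', Y' \in Ys -> stablemx T Y'.
  by move=> _ /mapP[j _ ->]; exact: Tst.
have [x [xT xU xY]] := @flag_step _ _ _ _ _ U T comm YsT rk.
have UUt : U *m U^t* = 1%:M by apply/unitarymxP.
set u0 := x - x *m U^t* *m U.
have u0U : u0 *m U^t* = 0.
  by rewrite mulmxBl -(mulmxA _ U) UUt mulmx1 subrr.
have u0T : (u0 <= T)%MS.
  apply: addmx_sub => //; rewrite eqmx_opp.
  exact: submx_trans (submxMl _ _) UT.
have u0Z : u0 *m Z *m U^T = 0.
  by move: u0T; rewrite sub_kermx mulmxA => /eqP.
have u0nz : u0 != 0.
  apply: contra xU; rewrite /u0 subr_eq0 => /eqP ->; exact: submxMl.
have xsub : (x <= U + u0)%MS.
  have -> : x = x *m U^t* *m U + u0 by rewrite /u0 addrC subrK.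
  by apply: addmx_sub_adds => //; exact: submxMl.
have u0Y j : (u0 *m Y j <= U + u0)%MS.
  rewrite mulmxBl; apply: addmx_sub.
    apply: submx_trans (xY _ (map_f _ (mem_enum _ j))) _.
    by rewrite addsmx_sub addsmxSl xsub.
  rewrite eqmx_opp; apply: submx_trans _ (addsmxSl _ _).
  rewrite -(mulmxA _ U); exact: submx_trans (submxMl _ _) (Ust j).1.
have npos : 0 < (u0 *m u0^t*) 0 0 by rewrite -dotmxE; exact: dotmx_is_dotmx.
set nrm := (u0 *m u0^t*) 0 0 in npos.
set c := (sqrtC nrm)^-1.
have cpos : 0 < c by rewrite invr_gt0 sqrtC_gt0.
have cnz : c != 0 by rewrite gt_eqF.
set u := c *: u0.
have uu : u *m u^t* = 1%:M.
  rewrite /u linearZ /= map_mxZ -scalemxAl -scalemxAr scalerA.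
  rewrite [u0 *m _]mx11_scalar -/nrm scale_scalar_mx.
  rewrite (_ : c * _ * nrm = c * c * nrm); last first.
    by congr (_ * _ * _); exact: geC0_conj (ltW cpos).
  rewrite /c -expr2 exprVn sqrtCK mulVf // gt_eqF //.
have uUt : u *m U^t* = 0 by rewrite -scalemxAl u0U scaler0.
have Uut : U *m u^t* = 0.
  by rewrite -[U]trmxCK -trC_mul uUt trmx0 map_mx0.
have uZ : u *m Z *m U^T = 0 by rewrite -!scalemxAl u0Z scaler0.
have u0u : (u0 <= u)%MS.
  have -> : u0 = c^-1 *: u by rewrite /u scalerA mulVf // scale1r.
  exact: scalemx_sub.
have uY j : (u *m Y j <= U + u)%MS.
  rewrite -scalemxAl; apply: scalemx_sub; apply: submx_trans (u0Y j) _.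
  by rewrite addsmx_sub addsmxSl (submx_trans u0u) // addsmxSr.
exists (col_mx U u); rewrite /inv; split.
- apply/unitarymxP; rewrite tr_col_mx map_row_mx mul_col_row UUt uu uUt Uut.
  by rewrite -scalar_mx_block.
  rewrite !mul_col_mx tr_col_mx !mul_mx_row Uiso uZ.
  have -> : U *m Z *m u^T = 0.
    have E : (u *m Z *m U^T)^T = - (U *m Z *m u^T).
      by rewrite !trmx_mul trmxK ZT mulNmx mulmxN mulmxA.
    by apply/eqP; rewrite -oppr_eq0 -E uZ trmx0.
  have -> : u *m Z *m u^T = 0.
    apply: tr11_0; by rewrite !trmx_mul trmxK ZT mulNmx mulmxN mulmxA.
  by rewrite !row_mx0 col_mx0.
- move=> j; split.
    rewrite mul_col_mx col_mx_sub -!addsmxE; apply/andP; split; last exact: uY.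
    exact: submx_trans (Ust j).1 (addsmxSl _ _).
  rewrite mul_col_mx tr_col_mx map_row_mx mul_col_row.
  have -> : U *m Y j *m u^t* = 0.
    by have [D ->] := submxP (Ust j).1; rewrite -mulmxA Uut mulmx0.
  rewrite is_trig_block_mx // eqxx (Ust j).2 /=.
  exact/is_diag_mx_is_trig/mx11_is_diag.
Qed.

Lemma exists_full : exists U : 'M[C]_(N, n), inv U.
Proof.
have H : forall m, (m <= N)%N -> exists U : 'M[C]_(m, n), inv U.
  elim => [_|m IH mN].
    exists 0; split.
    - by apply/unitarymxP; apply/matrixP => -[].
    - by apply/matrixP => -[].
    - move=> j; split; first by rewrite mul0mx sub0mx.
      by apply/is_trig_mxP => -[].
  have [U iU] := IH (ltnW mN).
  by have := @stepL m U mN iU; rewrite addn1.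
exact: H.
Qed.

Lemma XZ j : X j *m Z = Z *m (X j)^T.
Proof.
rewrite -{1}(Hdual j) /sharp mulNmx -!mulmxA ZZ !mulmxN mulmx1 opprK.
by [].
Qed.

Lemma ZXZ j : Z *m X j *m Z = - (X j)^T.
Proof.
by rewrite -mulmxA XZ mulmxA ZZ mulNmx mul1mx.
Qed.

Lemma trCN m p (A : 'M[C]_(m, p)) : (- A)^t* = - A^t*.
Proof. by rewrite linearN /= map_mxN. Qed.

Lemma final : exists U : 'M[C]_(N + N),
    symplectic_unitary U /\
    forall j : 'I_k, exists (T Cj : 'M[C]_N),
      U ^t* *m X j *m U = block_mx T Cj 0 T^T /\
      upper_triangular T /\ skew_symmetric Cj.
Proof.
have [U1 [U1u U1iso U1st]] := exists_full.
set U1c := U1 ^ conjC.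
set B := - (Z *m U1^t*).
have I1 : U1 *m U1^t* = 1%:M by apply/unitarymxP.
have I2 : U1c *m U1^T = 1%:M.
  by have := congr1 trmx I1; rewrite trmx_mul map_trmx trmxK trmx1.
have I4 : U1c *m Z *m U1^t* = 0.
  by rewrite /U1c -Zc -!map_mxM U1iso map_mx0.
have Bc : B^t* = U1 *m Z.
  by rewrite /B trCN trC_mul trmxCK ZtC mulmxN opprK.
have BT : B^T = U1c *m Z.
  by rewrite /B linearN /= trmx_mul ZT mulmxN opprK map_trmx trmxK.
have Uc : (row_mx U1^T B)^t* = col_mx U1c (U1 *m Z).
  by rewrite tr_row_mx map_col_mx -Bc trmxK.
have UT : (row_mx U1^T B)^T = col_mx U1 (U1c *m Z).
  by rewrite tr_row_mx trmxK BT.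
exists (row_mx U1^T B); split; first split.
- apply/unitarymxP; apply: mulmx1C.
  rewrite Uc mul_col_row I2 /B !mulmxN !mulmxA I4 U1iso -(mulmxA U1) ZZ mulmxN mulmx1 mulNmx I1.
  by rewrite !oppr0 opprK -scalar_mx_block.
  have ZZl p (A : 'M[C]_(p, n)) : A *m Z *m Z = - A.
    by rewrite -mulmxA ZZ mulmxN mulmx1.
  rewrite UT mul_col_mx mul_col_row U1iso /B !mulmxN !mulmxA !ZZl.
  by rewrite !mulNmx I1 I2 I4 !oppr0 opprK.
move=> j.
have [D UY] := submxP (U1st j).1.
have DE : D = U1 *m Y j *m U1^t* by rewrite UY -mulmxA I1 mulmx1.
have XU : X j *m U1^T = U1^T *m D^T.
  by rewrite -trmx_mul -UY /Y trmx_mul trmxK.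
exists D^T, (U1c *m X j *m B); split; last split.
- rewrite Uc mul_col_mx mul_col_row.
  rewrite -!mulmxA XU !mulmxA I2 mul1mx U1iso mul0mx.
  congr block_mx.
  have ZXZl p (A : 'M[C]_(p, n)) : A *m Z *m X j *m Z = - (A *m (X j)^T).
    by rewrite -!mulmxA (mulmxA Z) ZXZ mulmxN.
  by rewrite /B !mulmxN !mulmxA ZXZl mulNmx opprK -/(Y j) -DE trmxK.
- move=> a b ba; rewrite mxE.
  move: (U1st j).2; rewrite -DE => /is_trig_mxP; exact.
  rewrite /skew_symmetric /B !mulmxN linearN /= !trmx_mul /U1c !map_trmx trmxK ZT mulmxN mulNmx !opprK.
  by rewrite -!mulmxA (mulmxA (X j)) XZ !mulmxA.

Qed.

End Main.

Theorem mainTheorem10 (C : numClosedFieldType) (N k : nat)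
  (X : 'I_k -> 'M[C]_(N + N))
  (Hcomm : forall i j : 'I_k, X i *m X j = X j *m X i)
  (Hdual : forall j : 'I_k, sharp (X j) = X j) :
  exists U : 'M[C]_(N + N),
    symplectic_unitary U /\
    forall j : 'I_k, exists (T Cj : 'M[C]_N),
      U ^t* *m X j *m U = block_mx T Cj 0 T^T /\
      upper_triangular T /\ skew_symmetric Cj.
Proof. exact: (@final C N k X Hcomm Hdual). Qed.
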